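(* In the setting below, assume consistency, positivity and no unmeasured confounders. Fix $a\in\{0,1\}$ and, for $j=1,\ldots,p$, let the causal estimand $\theta_{aj}$ be the solution of $M_j(\theta):=\mathbb E[F_j(Y_j(a),\theta)]=0$, where each $M_j$ is differentiable and there are constants $c,\delta>0$ with $\min_{1\le j\le p}\inf_{\theta\in\mathcal B(\theta_{aj},\delta)}|M_j'(\theta)|\ge c$. Suppose $F_j(\tilde Y_j(a),\theta)$ is asymptotically unbiased for $F_j(Y_j(a),\theta)$, i.e., with $\Delta_{mj}(a,\theta)=\mathbb E[F_j(\tilde Y_j(a),\theta)\mid\mathbf S(a),\mathbf W]-F_j(Y_j(a),\theta)$, one has $\delta_m:=\max_{j\in[p]}\sup_{\theta\in\mathcal B(\theta_{aj},\delta)}|\mathbb E[\Delta_{mj}(a,\theta)]|=o(1)$ as $m\to\infty$. Let $\tilde\theta_{aj}\in\mathcal B(\theta_{aj},\delta)$ be a solution of $\mathbb E[\mathbb E[F_j(\tilde Y_j,\theta)\mid A=a,\mathbf W]]=0$. Then $\theta_{aj}$ is identified by $\tilde\theta_{aj}$ as $m\to\infty$, in the sense that $\tilde\theta_{aj}-\theta_{aj}\to 0$ as $m\to\infty$.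
   Context: Setting. $(A,\mathbf W,\mathbf S(0),\mathbf S(1),\mathbf X(0),\mathbf X(1))$ is drawn from a super-population, $A\in\{0,1\}$ treatment, $\mathbf W\in\mathbb R^q$ covariates, $\mathbf S(a)\in\mathbb R^\ell$ latent potential state, $\mathbf X(a)=[\mathbf X_1(a),\ldots,\mathbf X_m(a)]^\top\in\mathbb R^{m\times d}$ potential responses with rows conditionally i.i.d. given $(\mathbf S(a),\mathbf W)$. Potential outcome $\mathbf Y(a)=\mathbb E[f(\mathbf X_1(a))\mid\mathbf S(a),\mathbf W]\in\mathbb R^p$ for a prespecified $f$; derived outcome $\tilde{\mathbf Y}(a)=g(\mathbf X(a))$ and $\tilde{\mathbf Y}=g(\mathbf X)$ for prespecified $g$. Consistency: $\mathbf X=A\mathbf X(1)+(1-A)\mathbf X(0)$. Positivity: $\mathbb P(A=a\mid\mathbf W)\in(0,1)$. No unmeasured confounders: $A\perp\mathbf X(a)\mid\mathbf W$. $F_j:\mathbb R\times\mathbb R\to\mathbb R$ are given estimating functions; $\mathcal B(x,r)$ is the closed ball of radius $r$ around $x$. *)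

(* Defs.v *)
From HB Require Import structures.
From mathcomp Require Import all_boot all_order all_algebra.
From mathcomp Require Import all_classical all_reals all_analysis measurable_realfun.
Set Implicit Arguments. Unset Strict Implicit. Unset Printing Implicit Defensive.
Import Order.TTheory GRing.Theory Num.Theory.
Import numFieldNormedType.Exports.
Local Open Scope classical_set_scope.
Local Open Scope ring_scope.

(* [cond_exp_version P V Z phi]: the integrable real random variable Z has
   phi \o V as a version of the conditional expectation E[Z | V]
   (i.e. E[Z | sigma(V)] = phi(V)), with phi measurable. *)
Definition cond_exp_version {d dU} {T : measurableType d}
  {U : measurableType dU} {R : realType} (P : probability T R)
  (V : T -> U) (Z : T -> R) (phi : U -> R) : Prop :=
  [/\ P.-integrable setT (fun x => (Z x)%:E),
      measurable_fun setT phi,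
      P.-integrable setT (fun x => (phi (V x))%:E) &
      forall C, measurable C ->
        (\int[P]_(x in V @^-1` C) (Z x)%:E =
         \int[P]_(x in V @^-1` C) (phi (V x))%:E)%E ].

Definition ind {T} {R : realType} (E : set T) : T -> R :=
  fun x => if `[< E x >] then 1 else 0.

Definition gen_events {d} {I : Type} {T : Type} {TX : measurableType d}
  (Xs : I -> T -> TX) : set (set T) :=
  <<s [set E | exists i B, measurable B /\ E = Xs i @^-1` B] >>.

(* Conditional independence of A and the family Xs given W:
   for every event E in sigma(Xs), P(E | A, W) = P(E | W) a.s., i.e. there
   is a function psi of W alone which is a version of both P(E | W) and
   P(E | A, W). *)
Definition cond_indep_given {d dW dX} {T : measurableType d}
  {TW : measurableType dW} {TX : measurableType dX} {R : realType}
  (P : probability T R) (A : T -> bool) {I : Type} (Xs : I -> T -> TX)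
  (W : T -> TW) : Prop :=
  forall E, gen_events Xs E ->
    exists psi : TW -> R,
      cond_exp_version P W (ind E) psi /\
      cond_exp_version P (fun x => (A x, W x)) (ind E) (fun u => psi u.2).

(* The rows (Xs i)_{i in nat} are conditionally i.i.d. given V: there is a
   probability kernel kappa from the range of V to the row space such that
   for every m the conditional joint law of (Xs 0, ..., Xs (m-1)) given V is
   the m-fold product kappa(V)^{(x) m}. *)
Definition cond_iid_given {d dV dX} {T : measurableType d}
  {TV : measurableType dV} {TX : measurableType dX} {R : realType}
  (P : probability T R) (Xs : nat -> T -> TX) (V : T -> TV) : Prop :=
  exists kappa : TV -> probability TX R,
    (forall B, measurable B -> measurable_fun setT (fun u => (kappa u B : \bar R))) /\
    forall (m : nat) (B : nat -> set TX) (C : set TV),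
      (forall i, measurable (B i)) -> measurable C ->
      P (V @^-1` C `&` \bigcap_(i in [set i | (i < m)%N]) (Xs i @^-1` B i)) =
      (\int[P]_(x in V @^-1` C)
          (\prod_(i < m) fine (kappa (V x) (B i)))%:E)%E.

Definition prod_measurable {dX} {TX : measurableType dX} {R : realType}
  (m : nat) (h : ('I_m -> TX) -> R) : Prop :=
  forall B : set R, measurable B ->
    <<s [set E | exists (i : 'I_m) (C : set TX), measurable C /\
                   E = [set r | C (r i)]] >> (h @^-1` B).

(* Main.v *)
Require Import Defs.
From HB Require Import structures.
From mathcomp Require Import all_boot all_order all_algebra.
From mathcomp Require Import all_classical all_reals all_analysis measurable_realfun.
From mathcomp Require Import ring lra.
Import Order.TTheory GRing.Theory Num.Theory.
Import numFieldNormedType.Exports.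
Local Open Scope classical_set_scope.
Local Open Scope ring_scope.
Definition rpos {R : realType} (y : R) : R := (Num.max y 0)%R.
Definition rneg {R : realType} (y : R) : R := (Num.max (- y) 0)%R.

Lemma rpos_ge0 {R : realType} (y : R) : (0 <= rpos y)%R.
Proof. by rewrite /rpos le_max lexx orbT. Qed.
Lemma rneg_ge0 {R : realType} (y : R) : (0 <= rneg y)%R.
Proof. by rewrite /rneg le_max lexx orbT. Qed.
Lemma rposneg {R : realType} (y : R) : (y = rpos y - rneg y)%R.
Proof.
rewrite /rpos /rneg; have [y0|y0] := leP 0%R y.
  have [_|] := leP (- y) 0%R; first by rewrite subr0.
  by rewrite oppr_gt0 => /(le_lt_trans y0); rewrite ltxx.
have [|_] := leP (- y) 0%R; last by rewrite opprK add0r.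
by rewrite oppr_le0 => /(lt_le_trans y0); rewrite ltxx.
Qed.
Lemma measurable_rpos d (T : measurableType d) (R : realType) (f : T -> R) :
  measurable_fun setT f -> measurable_fun setT (fun x => rpos (f x)).
Proof. by move=> mf; apply: measurable_maxr => //. Qed.
Lemma measurable_rneg d (T : measurableType d) (R : realType) (f : T -> R) :
  measurable_fun setT f -> measurable_fun setT (fun x => rneg (f x)).
Proof. by move=> mf; apply: measurable_maxr => //; exact: measurable_funN. Qed.

Lemma rpos_id {R : realType} (y : R) : (0 <= y)%R -> rpos y = y.
Proof.
move=> y0; rewrite /rpos; have [//|] := leP 0%R y.
by move=> /(le_lt_trans y0); rewrite ltxx.
Qed.
Lemma rneg_0 {R : realType} (y : R) : (0 <= y)%R -> rneg y = 0%R.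
Proof.
move=> y0; rewrite /rneg; have [//|] := leP (- y)%R 0%R.
by rewrite oppr_gt0 => /(le_lt_trans y0); rewrite ltxx.
Qed.
Import HBNNSimple.
Local Open Scope ereal_scope.

Section sav.
Context d dU (T : measurableType d) (U : measurableType dU) (R : realType)
  (mu : measure T R) (V : T -> U) (mV : measurable_fun setT V).

Lemma sav_simple (s : {nnsfun U >-> R}) (k : T -> R) :
  measurable_fun setT k -> (forall x, (0 <= k x)%R) ->
  \int[mu]_x ((s (V x))%:E * (k x)%:E) =
  \sum_(r \in range s) (r%:E * \int[mu]_(x in V @^-1` (s @^-1` [set r])) (k x)%:E).
Proof.
move=> mk k0.
transitivity (\int[mu]_x (\sum_(r \in range s) ((r * \1_(s @^-1` [set r]) (V x))%:E * (k x)%:E))).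
  apply: eq_integral => x _.
  rewrite -ge0_mule_fsuml; last by move=> r; exact: nnfun_muleindic_ge0.
  by rewrite fsumEFin // -fimfunE.
rewrite ge0_integral_fsum //; last 2 first.
  - move=> r; apply: emeasurable_funM; last exact/measurable_EFinP.
    apply/measurable_EFinP; apply: measurable_funM => //.
    apply: measurableT_comp => //; exact: measurable_indic.
  - by move=> r x _; rewrite EFinM; apply: mule_ge0; [exact: nnfun_muleindic_ge0|rewrite lee_fin].
apply: eq_fsbigr => r rs.
under eq_integral do rewrite EFinM -muleA.
rewrite ge0_integralZl //; last 3 first.
  - apply: emeasurable_funM; last exact/measurable_EFinP.
    apply/measurable_EFinP; apply: measurableT_comp => //; exact: measurable_indic.
  - by move=> x _; rewrite mule_ge0 ?lee_fin.
  - by move: rs; rewrite inE => -[t _ <-]; rewrite lee_fin.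
congr (_ * _).
rewrite [RHS]integral_mkcond; apply: eq_integral => x _.
rewrite /patch /= /indic /=; case: ifPn => H.
  by rewrite mem_set ?mul1e //; move: H; rewrite inE.
rewrite memNset ?mul0e //; move=> H'; apply: (negP H); rewrite inE; exact: H'.
Qed.

Lemma sav (k1 k2 : T -> R) (u : U -> R) :
  measurable_fun setT k1 -> measurable_fun setT k2 ->
  (forall x, (0 <= k1 x)%R) -> (forall x, (0 <= k2 x)%R) ->
  (forall C, measurable C -> \int[mu]_(x in V @^-1` C) (k1 x)%:E = \int[mu]_(x in V @^-1` C) (k2 x)%:E) ->
  measurable_fun setT u -> (forall y, (0 <= u y)%R) ->
  \int[mu]_x ((u (V x))%:E * (k1 x)%:E) = \int[mu]_x ((u (V x))%:E * (k2 x)%:E).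
Proof.
move=> mk1 mk2 k10 k20 hC mu' u0.
have mEu : measurable_fun setT (EFin \o u) by exact/measurable_EFinP.
pose h := nnsfun_approx measurableT mEu.
have E (k : T -> R) : measurable_fun setT k -> (forall x, (0 <= k x)%R) ->
    \int[mu]_x ((u (V x))%:E * (k x)%:E) =
    limn (fun n => \int[mu]_x (((h n) (V x))%:E * (k x)%:E)).
  move=> mk k0.
  rewrite -monotone_convergence //; last 3 first.
  - move=> n; apply: emeasurable_funM; last exact/measurable_EFinP.
    apply/measurable_EFinP; apply: measurableT_comp => //.
  - by move=> n x _; rewrite mule_ge0 ?lee_fin.
  - move=> x _ a b ab; rewrite lee_wpmul2r ?lee_fin //.
    exact/lefP/nd_nnsfun_approx.
  apply: eq_integral => x _; apply/esym/cvg_lim => //.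
  apply: cvgeZr => //.
  exact: (cvg_nnsfun_approx measurableT mEu (fun y _ => u0 y) (I : setT (V x))).
rewrite (E k1) // (E k2) //; congr (limn _); apply/funext => n.
rewrite !sav_simple //; apply: eq_fsbigr => r _; congr (_ * _).
apply: hC; rewrite -[_ @^-1` _]setTI; exact: measurable_funP.
Qed.
End sav.
Section split.
Context d (T : measurableType d) (R : realType) (mu : measure T R).

Lemma int_split (D : set T) (Y : T -> R) : measurable D ->
  mu.-integrable D (EFin \o Y) ->
  [/\ \int[mu]_(x in D) (Y x)%:E =
      \int[mu]_(x in D) (rpos (Y x))%:E - \int[mu]_(x in D) (rneg (Y x))%:E,
    \int[mu]_(x in D) (rpos (Y x))%:E \is a fin_num &
    \int[mu]_(x in D) (rneg (Y x))%:E \is a fin_num].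
Proof.
move=> mD iY.
have Ep : \int[mu]_(x in D) (EFin \o Y)^\+ x = \int[mu]_(x in D) (rpos (Y x))%:E.
  by apply: eq_integral => x _; rewrite funeposE /rpos EFin_max.
have En : \int[mu]_(x in D) (EFin \o Y)^\- x = \int[mu]_(x in D) (rneg (Y x))%:E.
  by apply: eq_integral => x _; rewrite funenegE /rneg EFin_max EFinN.
split.
- by rewrite -Ep -En -integralE.
- by rewrite -Ep; exact: integrable_pos_fin_num.
- by rewrite -En; exact: integrable_neg_fin_num.
Qed.
End split.

Section savpm.
Context d dU (T : measurableType d) (U : measurableType dU) (R : realType)
  (mu : measure T R) (V : T -> U) (mV : measurable_fun setT V).

Lemma savpm (Y1 Y2 : T -> R) (u : U -> R) :
  mu.-integrable setT (EFin \o Y1) -> mu.-integrable setT (EFin \o Y2) ->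
  (forall C, measurable C -> \int[mu]_(x in V @^-1` C) (Y1 x)%:E = \int[mu]_(x in V @^-1` C) (Y2 x)%:E) ->
  measurable_fun setT u -> (forall y, (0 <= u y)%R) ->
  \int[mu]_x ((u (V x))%:E * (rpos (Y1 x))%:E) + \int[mu]_x ((u (V x))%:E * (rneg (Y2 x))%:E) =
  \int[mu]_x ((u (V x))%:E * (rpos (Y2 x))%:E) + \int[mu]_x ((u (V x))%:E * (rneg (Y1 x))%:E).
Proof.
move=> i1 i2 hC mu' u0.
have mY1 : measurable_fun setT Y1 by apply/measurable_EFinP; exact: (measurable_int mu).
have mY2 : measurable_fun setT Y2 by apply/measurable_EFinP; exact: (measurable_int mu).
have mup : forall (k : T -> R), measurable_fun setT k -> (forall x, (0 <= k x)%R) ->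
    measurable_fun setT (fun x => (u (V x))%:E * (k x)%:E).
  move=> k mk k0; apply: emeasurable_funM; apply/measurable_EFinP => //.
  exact: measurableT_comp.
have up0 : forall (k : T -> R), (forall x, (0 <= k x)%R) -> forall x, setT x ->
    0 <= (u (V x))%:E * (k x)%:E.
  by move=> k k0 x _; rewrite mule_ge0 ?lee_fin.
have S : forall (k1 k2 : T -> R), measurable_fun setT k1 -> measurable_fun setT k2 ->
    (forall x, (0 <= k1 x)%R) -> (forall x, (0 <= k2 x)%R) ->
    \int[mu]_x ((u (V x))%:E * (k1 x + k2 x)%:E) =
    \int[mu]_x ((u (V x))%:E * (k1 x)%:E) + \int[mu]_x ((u (V x))%:E * (k2 x)%:E).
  move=> k1 k2 mk1 mk2 k10 k20.
  rewrite -ge0_integralD //; [|exact: up0|exact: mup|exact: up0|exact: mup].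
  by apply: eq_integral => x _; rewrite EFinD muleDr.
rewrite -S; [|exact: measurable_rpos|exact: measurable_rneg|move=> x; exact: rpos_ge0|move=> x; exact: rneg_ge0].
rewrite -S; [|exact: measurable_rpos|exact: measurable_rneg|move=> x; exact: rpos_ge0|move=> x; exact: rneg_ge0].
apply: sav => //.
- by apply: measurable_funD; [exact: measurable_rpos|exact: measurable_rneg].
- by apply: measurable_funD; [exact: measurable_rpos|exact: measurable_rneg].
- by move=> x; rewrite addr_ge0 ?rpos_ge0 ?rneg_ge0.
- by move=> x; rewrite addr_ge0 ?rpos_ge0 ?rneg_ge0.
move=> C mC.
have mD : measurable (V @^-1` C) by rewrite -[_ @^-1` _]setTI; exact: mV.
have iD1 := integrableS measurableT mD (@subsetT _ _) i1.
have iD2 := integrableS measurableT mD (@subsetT _ _) i2.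
have [e1 f1 g1] := @int_split _ _ _ mu _ _ mD iD1.
have [e2 f2 g2] := @int_split _ _ _ mu _ _ mD iD2.
have := hC C mC; rewrite e1 e2 => h.
rewrite (eq_integral (fun x => (rpos (Y1 x))%:E + (rneg (Y2 x))%:E)); last by move=> x _; rewrite EFinD.
rewrite [RHS](eq_integral (fun x => (rpos (Y2 x))%:E + (rneg (Y1 x))%:E)); last by move=> x _; rewrite EFinD.
rewrite !ge0_integralD //; first last.
- by apply/measurable_funTS/measurable_EFinP; exact: measurable_rneg.
- by move=> x _; rewrite lee_fin rneg_ge0.
- by apply/measurable_funTS/measurable_EFinP; exact: measurable_rpos.
- by move=> x _; rewrite lee_fin rpos_ge0.
- by apply/measurable_funTS/measurable_EFinP; exact: measurable_rneg.
- by move=> x _; rewrite lee_fin rneg_ge0.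
- by apply/measurable_funTS/measurable_EFinP; exact: measurable_rpos.
- by move=> x _; rewrite lee_fin rpos_ge0.
move: h f1 g1 f2 g2.
set a1 := \int[mu]_(x in _) (rpos (Y1 x))%:E.
set b1 := \int[mu]_(x in _) (rneg (Y1 x))%:E.
set a2 := \int[mu]_(x in _) (rpos (Y2 x))%:E.
set b2 := \int[mu]_(x in _) (rneg (Y2 x))%:E.
move=> h f1 g1 f2 g2.
rewrite -(fineK f1) -(fineK g1) -(fineK f2) -(fineK g2) in h *.
rewrite -!EFinB in h; rewrite -!EFinD; move: h => [] h; congr EFin.
by apply/eqP; rewrite -subr_eq0; apply/eqP; move/eqP: h; rewrite -subr_eq0 => /eqP <-; ring.
Qed.
End savpm.

Lemma int_split0 d (T : measurableType d) (R : realType) (mu : measure T R) (D : set T) (Y : T -> R) :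
  \int[mu]_(x in D) (Y x)%:E =
      \int[mu]_(x in D) (rpos (Y x))%:E - \int[mu]_(x in D) (rneg (Y x))%:E.
Proof.
rewrite integralE; congr (_ - _); apply: eq_integral => x _.
  by rewrite funeposE /rpos EFin_max.
by rewrite funenegE /rneg EFin_max EFinN.
Qed.

Lemma int_ind d (T : measurableType d) (R : realType) (mu : measure T R) (E : set T)
  (f : T -> \bar R) :
  \int[mu]_(x in E) f x = \int[mu]_x (f x * (ind E x)%:E).
Proof.
rewrite integral_mkcond; apply: eq_integral => x _; rewrite /patch /ind.
case: (boolP (x \in E)) => xE.
  by rewrite asboolT ?mule1 //; rewrite inE in xE.
by rewrite asboolF ?mule0 //; move=> Ex; move/negP: xE; apply; rewrite inE.
Qed.
Lemma ereal_final (R : realType) (pZ nZ pf nf : \bar R) : pZ \is a fin_num ->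
  nZ \is a fin_num -> 0 <= pf -> 0 <= nf -> pZ + nf = pf + nZ -> pf - nf = 0 -> pZ - nZ = 0.
Proof.
case: pZ => // pZ _; case: nZ => // nZ _.
case: pf => [pf| |] //; case: nf => [nf| |] // _ _ /=.
- move=> [H1] [H2]; congr EFin.
  have : (pZ - nZ = pf - nf)%R by rewrite -[pZ](addrK nf) H1; ring.
  by rewrite H2.
Qed.

Definition cylm {dX} {TX : measurableType dX} (m : nat) : set (set ('I_m -> TX)) :=
  [set E | exists (i : 'I_m) (C : set TX), measurable C /\ E = [set r | C (r i)]].

Lemma gen_events_meas d dX (T : measurableType d) (TX : measurableType dX)
  (Xs : nat -> T -> TX) : (forall i, measurable_fun setT (Xs i)) ->
  forall E, gen_events Xs E -> measurable E.
Proof.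
move=> mX E; apply: smallest_sub; first exact: sigma_algebra_measurable.
move=> _ [i [B [mB ->]]]; rewrite -[_ @^-1` _]setTI; exact: mX.
Qed.

Lemma rows_gen d dX (T : measurableType d) (TX : measurableType dX)
  (Xs : nat -> T -> TX) (m : nat) (Y : set ('I_m -> TX)) :
  <<s cylm m >> Y -> gen_events Xs ((fun x (i : 'I_m) => Xs (val i) x) @^-1` Y).
Proof.
move=> hY.
set rows := fun x (i : 'I_m) => Xs (val i) x.
have H1 : <<s setT, preimage_set_system setT rows (cylm m) >> (rows @^-1` Y).
  by rewrite g_sigma_preimageE; exists Y => //; rewrite setTI.
move: H1; apply: sub_smallest2r.
- exact: smallest_sigma_algebra.
- move=> _ [B [i [C [mC ->]]] <-]; exists (val i), C; split => //.
  by rewrite setTI.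
Qed.
Arguments gen_events_meas {d dX T TX Xs}.
Arguments rows_gen {d dX T TX Xs m Y}.

Local Open Scope ring_scope.

Lemma key_zero (R : realType) d dW dX (T : measurableType d) (P : probability T R)
  (TW : measurableType dW) (TX : measurableType dX)
  (A : T -> bool) (W : T -> TW) (Xa : nat -> T -> TX) (a : bool) (m : nat)
  (Fr : ('I_m -> TX) -> R) (Z : T -> R) (ce : bool * TW -> R) (pi : TW -> R) :
  measurable_fun setT A -> measurable_fun setT W -> (forall i, measurable_fun setT (Xa i)) ->
  (forall B, measurable B -> <<s cylm m >> (Fr @^-1` B)) ->
  P.-integrable setT (fun x => (Fr (fun i => Xa (val i) x))%:E) ->
  cond_exp_version P (fun x => (A x, W x)) Z ce ->
  (forall x, A x = a -> Z x = Fr (fun i => Xa (val i) x)) ->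
  cond_exp_version P W (ind [set x | A x]) pi -> (forall x, 0 < pi (W x) < 1)%R ->
  cond_indep_given P A Xa W ->
  (\int[P]_x (ce (a, W x))%:E = 0)%E ->
  (\int[P]_x (Fr (fun i => Xa (val i) x))%:E = 0)%E.
Proof.
move=> mA mW mXa mFr iZa [iZ mce ice hce] ZZa [iind mpi ipi hpi] pi01 CI ce0.
pose U := g_sigma_algebraType (@cylm _ TX m).
pose rows : T -> U := fun x (i : 'I_m) => Xa (val i) x.
have mrows : measurable_fun setT rows.
  move=> _ Y mY; rewrite setTI; apply: (gen_events_meas mXa); exact: rows_gen.
have mFrU : measurable_fun setT (Fr : U -> R).
  move=> _ B mB; rewrite setTI; exact: mFr.
pose Za x := Fr (rows x).
have mZa : measurable_fun setT Za by exact: measurableT_comp.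
pose iota x : R := if A x == a then 1%R else 0%R.
pose q w : R := if a then pi w else (1 - pi w)%R.
pose h w : R := `|q w| `^ (-1).
have q0 : forall x, (0 < q (W x))%R.
  by move=> x; rewrite /q; have /andP[? ?] := pi01 x; case: ifP => _ //; rewrite subr_gt0.
have hq : forall x, (h (W x) * q (W x) = 1)%R.
  by move=> x; rewrite /h powR_inv1 // gtr0_norm ?q0 // mulVf // gt_eqF ?q0.
have h0 : forall w, (0 <= h w)%R by move=> w; exact: powR_ge0.
have mq : measurable_fun setT q.
  rewrite /q; case: (a) => //; apply: measurable_funB => //.
have mh : measurable_fun setT h.
  have -> : h = ((@powR R)^~ (-1)%R) \o (Num.Def.normr \o q) by [].
  exact (measurableT_comp (measurable_powR (-1)%R) (measurableT_comp (@normr_measurable R setT) mq)).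
have miota : measurable_fun setT iota.
  have mb : measurable_fun setT (fun b : bool => if b == a then 1%R else 0%R : R).
    by move=> _ B _.
  exact: (measurableT_comp mb mA).
have mqW : measurable_fun setT (fun x => q (W x)) by exact: measurableT_comp.
have mWpre : forall C, measurable C -> measurable (W @^-1` C).
  by move=> C mC; rewrite -[_ @^-1` _]setTI; exact: mW.
have S1 : forall C, measurable C ->
    (\int[P]_(x in W @^-1` C) (iota x)%:E = \int[P]_(x in W @^-1` C) (q (W x))%:E)%E.
  move=> C mC; have mD := mWpre C mC.
  have hp := hpi C mC.
  have indE : forall x : T, ind [set y | A y] x = (if A x == true then 1 else 0)%R :> R.
    by move=> x; rewrite /ind /= (asboolb (A x)) eqb_id.
  rewrite /iota /q; case: (a).
    by rewrite -hp; apply: eq_integral => x _; rewrite indE.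
  transitivity (\int[P]_(x in W @^-1` C) ((cst 1%R x)%:E - (ind [set x | A x] x)%:E))%E.
    apply: eq_integral => x _; rewrite indE eqbF_neg -EFinB /=.
    by case: (A x) => /=; rewrite ?subrr ?subr0.
  transitivity (\int[P]_(x in W @^-1` C) ((cst 1%R x)%:E - (pi (W x))%:E))%E; last first.
    by apply: eq_integral => x _; rewrite -EFinB.
  rewrite integralB //; [|exact: finite_measure_integrable_cst|].
  rewrite integralB //; [|exact: finite_measure_integrable_cst|].
  - by rewrite hp.
  - exact: (integrableS measurableT mD (@subsetT _ _) ipi).
  - exact: (integrableS measurableT mD (@subsetT _ _) iind).
have S2 : forall v : TW -> R, measurable_fun setT v -> (forall w, (0 <= v w)%R) ->
    (\int[P]_x ((v (W x))%:E * (iota x)%:E) = \int[P]_x ((v (W x))%:E * (q (W x))%:E))%E.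
  move=> v mv v0; apply: sav => //.
  - by move=> x; rewrite /iota; case: ifP.
  - by move=> x; exact: ltW.
pose V x := (A x, W x).
have mV : measurable_fun setT V by exact: measurable_fun_pair.
pose uAW (z : bool * TW) : R := ((if z.1 == a then 1 else 0) * h z.2)%R.
have muAW : measurable_fun setT uAW.
  apply: measurable_funM.
    have mb : measurable_fun setT (fun b : bool => if b == a then 1%R else 0%R : R).
      by move=> _ B _.
    exact: (measurableT_comp mb measurable_fst).
  exact: (measurableT_comp mh measurable_snd).
have uAW0 : forall z, (0 <= uAW z)%R.
  by move=> z; rewrite /uAW mulr_ge0 //; case: ifP.
have uAWV : forall x, uAW (V x) = (iota x * h (W x))%R by [].
have iota0 : forall x, (0 <= iota x)%R by move=> x; rewrite /iota; case: ifP.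
have mpsiW : forall psi : TW -> R, measurable_fun setT psi -> forall part : R -> R,
    measurable_fun setT part -> measurable_fun setT (fun w => h w * part (psi w))%R.
  by move=> psi mps part mpart; apply: measurable_funM => //; exact: measurableT_comp.
have S2' : forall v : TW -> R, measurable_fun setT v -> (forall w, (0 <= v w)%R) ->
    (\int[P]_x ((h (W x) * v (W x))%:E * (iota x)%:E) = \int[P]_x (v (W x))%:E)%E.
  move=> v mv v0.
  rewrite (S2 (fun w => h w * v w)%R); first last.
  - by move=> w; rewrite mulr_ge0.
  - exact: measurable_funM.
  apply: eq_integral => x _; rewrite -EFinM; congr EFin.
  by rewrite mulrAC hq mul1r.
have CIg : forall Y, measurable Y ->
    (\int[P]_(x in rows @^-1` Y) (iota x * h (W x))%:E = \int[P]_(x in rows @^-1` Y) (cst 1%R x)%:E)%E.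
  move=> Y mY.
  have gE : gen_events Xa (rows @^-1` Y) by exact: rows_gen.
  have mE := gen_events_meas mXa _ gE.
  have [psi [[iE mpsi ipsi hpsi] [iE' mpsi' ipsi' hpsi']]] := CI _ gE.
  set E := rows @^-1` Y in gE mE iE mpsi ipsi hpsi iE' mpsi' ipsi' hpsi' *.
  have indge0 : forall x, (0 <= ind E x :> R)%R by move=> x; rewrite /ind; case: ifP.
  have := @savpm _ _ T _ R P V mV (ind E) (fun x => psi (W x)) uAW iE ipsi hpsi' muAW uAW0.
  have e1 : forall x, rpos (ind E x : R) = ind E x.
    by move=> x; exact: rpos_id.
  have e2 : forall x, rneg (ind E x : R) = 0%R.
    by move=> x; exact: rneg_0.
  under eq_integral do rewrite e1.
  under [X in _ = _ + X]eq_integral do rewrite e2 mule0.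
  rewrite integral0 adde0.
  have ep : forall part : R -> R, measurable_fun setT part -> (forall y, (0 <= part y)%R) ->
      (\int[P]_x ((uAW (V x))%:E * (part (psi (W x)))%:E) = \int[P]_x (part (psi (W x)))%:E)%E.
    move=> part mpart part0.
    rewrite -(S2' (fun w => part (psi w))) //; last exact: measurableT_comp.
    apply: eq_integral => x _; rewrite uAWV -!EFinM; congr EFin.
    by rewrite [RHS]mulrC mulrA.
  rewrite ep; last 2 first.
  - exact: measurable_rneg.
  - by move=> y; exact: rneg_ge0.
  rewrite ep; last 2 first.
  - exact: measurable_rpos.
  - by move=> y; exact: rpos_ge0.
  have [es fs gs] := @int_split _ _ _ P setT (fun x => psi (W x)) measurableT ipsi.
  move=> H.
  rewrite [LHS]int_ind [RHS]int_ind.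
  have -> : (\int[P]_x ((iota x * h (W x))%:E * (ind E x)%:E) =
      \int[P]_x ((uAW (V x))%:E * (ind E x)%:E))%E by [].
  rewrite [RHS](_ : _ = \int[P]_x ((ind E x)%:E))%E; last first.
    by apply: eq_integral => x _; rewrite mul1e.
  have := hpsi setT measurableT; rewrite preimage_setT => ->.
  by rewrite es -H addeK.
have CIx : forall part : R -> R, measurable_fun setT part -> (forall y, (0 <= part y)%R) ->
    (\int[P]_x ((part (Za x))%:E * (iota x * h (W x))%:E) = \int[P]_x ((part (Za x))%:E * (cst 1%R x)%:E))%E.
  move=> part mpart part0.
  apply: (@sav _ _ T U R P rows mrows (fun x => iota x * h (W x))%R (cst 1%R) (fun r => part (Fr r))).
  - by apply: measurable_funM => //; exact: measurableT_comp.
  - exact: measurable_cst.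
  - by move=> x; rewrite mulr_ge0.
  - by [].
  - exact: CIg.
  - exact: measurableT_comp.
  - by [].
have mcea : measurable_fun setT (fun w => ce (a, w)) by exact: measurable_fun_pair2.
have S5 : forall part : R -> R, measurable_fun setT part -> (forall y, (0 <= part y)%R) ->
    (\int[P]_x ((uAW (V x))%:E * (part (ce (V x)))%:E) = \int[P]_x (part (ce (a, W x)))%:E)%E.
  move=> part mpart part0.
  rewrite -(S2' (fun w => part (ce (a, w)))) //; last exact: measurableT_comp.
  apply: eq_integral => x _; rewrite uAWV -!EFinM; congr EFin.
  rewrite /iota /V; case: eqP => [->|_] /=; last by rewrite !mul0r mulr0.
  by rewrite mul1r mulr1 mulrC.
have S6 : forall part : R -> R,
    (\int[P]_x ((uAW (V x))%:E * (part (Z x))%:E) = \int[P]_x ((part (Za x))%:E * (iota x * h (W x))%:E))%E.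
  move=> part; apply: eq_integral => x _; rewrite uAWV -!EFinM; congr EFin.
  rewrite /iota; case: eqP => [Hx|_] /=; last by rewrite !mul0r mulr0.
  by rewrite ZZa // mulrC.
have mrp : measurable_fun setT (@rpos R) by exact: (@measurable_rpos _ R R id).
have mrn : measurable_fun setT (@rneg R) by exact: (@measurable_rneg _ R R id).
have := @savpm _ _ T _ R P V mV Z (fun x => ce (A x, W x)) uAW iZ ice hce muAW uAW0.
rewrite (S6 rpos) (S6 rneg) (S5 rpos mrp rpos_ge0) (S5 rneg mrn rneg_ge0).
rewrite (CIx rpos mrp rpos_ge0) (CIx rneg mrn rneg_ge0).
under eq_integral do rewrite mule1.
under [X in _ + X = _]eq_integral do rewrite /=.
under [X in _ = _ + X]eq_integral do rewrite mule1.
move=> H.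
have [eZ fpZ fnZ] := @int_split _ _ _ P setT Za measurableT iZa.
rewrite (@int_split0 _ _ _ P setT (fun x => ce (a, W x))) in ce0.
change (\int[P]_x (Za x)%:E = 0)%E; rewrite eZ.
have p0 : (0 <= \int[P]_x (rpos (ce (a, W x)))%:E)%E.
  by apply: integral_ge0 => x _; rewrite lee_fin rpos_ge0.
have n0 : (0 <= \int[P]_x (rneg (ce (a, W x)))%:E)%E.
  by apply: integral_ge0 => x _; rewrite lee_fin rneg_ge0.
exact: (@ereal_final _ _ _ _ _ fpZ fnZ p0 n0 H ce0).
Qed.
Lemma mvt_bound (R : realType) (Mf : R -> R) (t0 c delta t : R) :
  (forall th, derivable Mf th 1) -> Mf t0 = 0 ->
  (forall th, `|th - t0| <= delta -> c <= `|derive1 Mf th|) ->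
  `|t - t0| <= delta -> c * `|t - t0| <= `|Mf t|.
Proof.
move=> dM M0 hc ht.
have key : forall u v, u < v -> `|u - t0| <= delta -> `|v - t0| <= delta ->
    (t0 = u \/ t0 = v) -> c * (v - u) <= `|Mf v - Mf u|.
  move=> u v uv hu hv ht0.
  have [xi xiI ->] := @MVT R Mf (derive1 Mf) u v uv
    (fun x _ => ltac:(rewrite derive1E; exact: derivableP))
    (derivable_within_continuous (fun x _ => dM x)).
  have vu0 : 0 < v - u by rewrite subr_gt0.
  rewrite normrM (gtr0_norm vu0) ler_wpM2r ?(ltW vu0) //.
  apply: hc; move: xiI; rewrite in_itv /= => /andP[ux xv].
  case: ht0 => ht0; subst t0.
  - apply: le_trans hv.
    rewrite gtr0_norm ?subr_gt0 // gtr0_norm ?subr_gt0 //.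
    by rewrite lerD2r ltW.
  - apply: le_trans hu.
    rewrite ltr0_norm ?subr_lt0 // ltr0_norm ?subr_lt0 //.
    by rewrite !opprB lerD2l lerN2 ltW.
have [tt0|t0t|<-] := ltgtP t t0.
- have := key t t0 tt0 ht; rewrite subrr normr0 => /(_ (le_trans (normr_ge0 _) ht) (or_intror erefl)).
  have -> : `|t - t0| = t0 - t by rewrite distrC gtr0_norm // subr_gt0.
  by rewrite M0 sub0r normrN; apply.
- have := key t0 t t0t; rewrite subrr normr0 => /(_ (le_trans (normr_ge0 _) ht) ht (or_introl erefl)).
  have -> : `|t - t0| = t - t0 by rewrite gtr0_norm // subr_gt0.
  by rewrite M0 subr0; apply.
- by rewrite subrr normr0 mulr0.
Qed.

Local Close Scope ereal_scope.
Local Open Scope ring_scope.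

Theorem lemma4
  (R : realType) (d dW dS dX : measure_display)
  (T : measurableType d) (P : probability T R)
  (TW : measurableType dW) (TS : measurableType dS) (TX : measurableType dX)
  (p : nat)
  (* treatment, covariates, latent potential states, potential rows *)
  (A : T -> bool) (W : T -> TW) (S : bool -> T -> TS)
  (Xpot : bool -> nat -> T -> TX)
  (* observed rows *)
  (X : nat -> T -> TX)
  (* prespecified f, g (g m acts on the first m rows) and estimating fns *)
  (f : TX -> 'I_p -> R) (g : forall m : nat, ('I_m -> TX) -> 'I_p -> R)
  (F : 'I_p -> R -> R -> R)
  (a : bool)
  (* version of Y(a) = E[f(X_1(a)) | S(a), W] *)
  (Ya : TS * TW -> 'I_p -> R)
  (theta : 'I_p -> R) (c delta : R)
  (* version of E[F_j(tY_j(a), th) | S(a), W] entering Delta_{mj}(a, th) *)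
  (ceS : nat -> 'I_p -> R -> TS * TW -> R)
  (ttheta : nat -> 'I_p -> R)
  (* version of E[F_j(tY_j, ttheta_mj) | A, W] *)
  (ceA : nat -> 'I_p -> bool * TW -> R) :
  (* measurability of the random elements *)
  measurable_fun setT A -> measurable_fun setT W ->
  (forall b, measurable_fun setT (S b)) ->
  (forall b i, measurable_fun setT (Xpot b i)) ->
  (* rows of X(b) conditionally i.i.d. given (S(b), W) *)
  (forall b, cond_iid_given P (Xpot b) (fun x => (S b x, W x))) ->
  (* g and F are measurable *)
  (forall m j, prod_measurable (fun r => g m r j)) ->
  (forall j th, measurable_fun setT (fun y => F j y th)) ->
  (* consistency *)
  (forall i x, X i x = if A x then Xpot true i x else Xpot false i x) ->
  (* positivity: P(A = 1 | W) in (0,1) *)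
  (exists pi : TW -> R, cond_exp_version P W (ind [set x | A x]) pi /\
     forall x, 0 < pi (W x) < 1) ->
  (* no unmeasured confounders: A _||_ X(b) | W *)
  (forall b, cond_indep_given P A (Xpot b) W) ->
  (* Y(a) = E[f(X_1(a)) | S(a), W] *)
  (forall j, cond_exp_version P (fun x => (S a x, W x))
                (fun x => f (Xpot a 0%N x) j) (fun u => Ya u j)) ->
  (* M_j(th) = E[F_j(Y_j(a), th)] is well defined and differentiable *)
  (forall j th, P.-integrable setT
                  (fun x => (F j (Ya (S a x, W x) j) th)%:E)) ->
  let M := fun j th => fine (\int[P]_x (F j (Ya (S a x, W x) j) th)%:E)%E in
  (forall j th, derivable (M j) th 1) ->
  (* theta_aj solves M_j = 0 *)
  (forall j, M j (theta j) = 0) ->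
  0 < c -> 0 < delta ->
  (forall j th, `|th - theta j| <= delta -> c <= `|derive1 (M j) th|) ->
  (* Delta_{mj}(a, th) via versions of the conditional expectations *)
  (forall m j th, `|th - theta j| <= delta ->
     cond_exp_version P (fun x => (S a x, W x))
       (fun x => F j (g m (fun i => Xpot a (val i) x) j) th) (ceS m j th)) ->
  (* delta_m = max_j sup_{th in B(theta_aj, delta)} |E[Delta_mj(a, th)]| = o(1) *)
  (forall eps : R, 0 < eps -> exists N : nat, forall m : nat, (N <= m)%N ->
     forall j th, `|th - theta j| <= delta ->
       `| fine (\int[P]_x (ceS m j th (S a x, W x)
                          - F j (Ya (S a x, W x) j) th)%:E)%E | <= eps) ->
  (* ttheta_mj in B(theta_aj, delta) solves E[E[F_j(tY_j, th) | A = a, W]] = 0 *)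
  (forall m j, `|ttheta m j - theta j| <= delta) ->
  (forall m j, cond_exp_version P (fun x => (A x, W x))
       (fun x => F j (g m (fun i => X (val i) x) j) (ttheta m j)) (ceA m j)) ->
  (forall m j, (\int[P]_x (ceA m j (a, W x))%:E = 0)%E) ->
  (* conclusion: ttheta_aj - theta_aj -> 0 as m -> oo *)
  forall j, (fun m => ttheta m j - theta j) @ \oo --> (0 : R).
Proof.
move=> mA mW mS mXpot iid gmeas Fmeas cons [pi [vpi pi01]] NUC vYa iFYa M dM Mtheta
  c0 delta0 hc vceS hdelta tball vceA ceA0 j.
have key : forall m, (\int[P]_x (F j (g m (fun i => Xpot a (val i) x) j) (ttheta m j))%:E = 0)%E.
  move=> m.
  have [iZa _ _ _] := vceS m j (ttheta m j) (tball m j).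
  apply: (@key_zero R d dW dX T P TW TX A W (Xpot a) a m
     (fun r => F j (g m r j) (ttheta m j))
     (fun x => F j (g m (fun i => X (val i) x) j) (ttheta m j)) (ceA m j) pi
     mA mW (mXpot a) _ iZa (vceA m j) _ vpi pi01 (NUC a) (ceA0 m j)).
  - move=> B mB.
    have mB' : measurable ((fun y => F j y (ttheta m j)) @^-1` B).
      by rewrite -[_ @^-1` _]setTI; exact: Fmeas.
    exact: (gmeas m j _ mB').
  - move=> x Ax; congr (F j (g m _ j) _); apply/funext => i.
    by rewrite cons -Ax; case: (A x).
have Mbound : forall eps : R, 0 < eps -> exists N : nat, forall m : nat, (N <= m)%N ->
    `|M j (ttheta m j)| <= eps.
  move=> eps eps0; have [N HN] := hdelta eps eps0; exists N => m Nm.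
  have := HN m Nm j (ttheta m j) (tball m j).
  have [iceS mceS iceS' hceS] := vceS m j (ttheta m j) (tball m j).
  have := hceS setT measurableT; rewrite preimage_setT key => h0.
  rewrite (eq_integral (fun x => (ceS m j (ttheta m j) (S a x, W x))%:E -
     (F j (Ya (S a x, W x) j) (ttheta m j))%:E)%E); last by move=> x _; rewrite EFinB.
  rewrite integralB; [|exact: measurableT|exact: iceS'|exact: iFYa].
  by rewrite -h0 sub0e fineN normrN.
apply/cvgrPdist_le => e e0.
have [N HN] := Mbound (e * c) (mulr_gt0 e0 c0).
exists N => // m /= Nm.
rewrite sub0r normrN.
have := @mvt_bound R (M j) (theta j) c delta (ttheta m j) (dM j) (Mtheta j) (hc j) (tball m j).
move=> /le_trans /(_ (HN m Nm)).
by rewrite mulrC ler_pM2r.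
Qed.
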